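(* Consider a market in which every hospital values all contracts equally, i.e. for each $h\in H$ there is $\gamma_h>0$ with $f_h(Y)=\gamma_h|Y|$ for all $Y\subseteq X_h$. For each $h$, let $\mathrm{Ch}_h$ be the choice function that, given $X'\subseteq X_h$, sorts $X'$ in non-decreasing order of wage (ties broken by a fixed order), starts with $Y=\emptyset$, goes through the sorted contracts adding each contract $x$ to $Y$ if $w_h(Y\cup\{x\})\le B_h$, and returns $Y$. Then the generalized deferred acceptance mechanism with these choice functions is strategy-proof for doctors and produces a $B_H$-stable matching.
   Context: A market consists of a finite set of doctors $D$, a finite set of hospitals $H$, a finite set of contracts $X\subseteq D\times H\times\mathbb{R}_{>0}$ (contract $x=(d,h,w)$ has doctor $x_D=d$, hospital $x_H=h$, wage $x_W=w$), strict preferences $\succ_d$ of each doctor $d$ over $X_d\cup\{\emptyset\}$, utilities $f_h$ of each hospital on subsets of $X_h$, and budgets $B_H=(B_h)_h$, $B_h>0$, with $0<x_W\le B_h$ for all $x\in X_h$. For $Y\subseteq X$: $Y_d=\{x\in Y:x_D=d\}$, $Y_h=\{x\in Y:x_H=h\}$, $w_h(Y)=\sum_{x\in Y_h}x_W$. A matching is $Y\subseteq X$ with $|Y_d|\le1$ for all $d$. A matching $Y$ is $B_H$-feasible if $w_h(Y)\le B_h$ for all $h$; a matching $Z\subseteq X_h$ blocks $Y$ if every doctor $x_D$ with $x\in Z\setminus Y$ strictly prefers $x$ to her contract in $Y$ (or to $\emptyset$), $f_h(Z)>f_h(Y_h)$ and $w_h(Z)\le B_h$; $Y$ is $B_H$-stable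 if it is $B_H$-feasible and not blocked by any $h$ and $Z\subseteq X_h$. Generalized deferred acceptance with hospital choice functions $\mathrm{Ch}_h$: let $\mathrm{Ch}_H(Y)=\bigcup_h\mathrm{Ch}_h(Y_h)$; $\mathrm{Ch}_d(Y)=\{x\}$ for the $\succ_d$-best $x\in Y_d$ if $x\succ_d\emptyset$, else $\emptyset$; $\mathrm{Ch}_D(Y)=\bigcup_d\mathrm{Ch}_d(Y_d)$. Set $R^{(0)}=\emptyset$; for $i=1,2,\dots$: $Y^{(i)}=\mathrm{Ch}_D(X\setminus R^{(i-1)})$, $Z^{(i)}=\mathrm{Ch}_H(Y^{(i)})$, $R^{(i)}=R^{(i-1)}\cup(Y^{(i)}\setminus Z^{(i)})$; if $Y^{(i)}=Z^{(i)}$, output $Y^{(i)}$. This is a mechanism mapping reported doctor preference profiles to matchings; it is strategy-proof for doctors if for every doctor $d$, every profile $\succ_D$ and every alternative report $\succ'_d$, the outcome of $d$ under $\succ_D$ is weakly $\succ_d$-preferred to her outcome under $(\succ'_d,\succ_{-d})$. *)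

(* Defs.v *)
From HB Require Import structures.
From mathcomp Require Import all_boot all_order all_algebra.
Set Implicit Arguments. Unset Strict Implicit. Unset Printing Implicit Defensive.
Import Order.TTheory GRing.Theory Num.Theory.
Local Open Scope ring_scope.

(* A market: doctors D, hospitals H, contracts C (a finite type; the set X of
   the paper is all of C).  A doctor preference is a rank function  option C -> nat
   (None = the outside option "emptyset"); lower rank = more preferred. *)

Section Market.
Variables (R : realFieldType) (D H C : finType).
Variables (cD : C -> D) (cH : C -> H) (cW : C -> R).

Definition of_doc (Y : {set C}) (d : D) : {set C} := [set x in Y | cD x == d].
Definition of_hosp (Y : {set C}) (h : H) : {set C} := [set x in Y | cH x == h].

Definition wage_h (h : H) (Y : {set C}) : R := \sum_(x in Y | cH x == h) cW x.

Definition strict_pref (d : D) (p : option C -> nat) : Prop :=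
  {in [pred o : option C | if o is Some x then cD x == d else true] &, injective p}.

Definition is_matching (Y : {set C}) : Prop := forall d, (#|of_doc Y d| <= 1)%N.

Definition outcome (Y : {set C}) (d : D) : option C := [pick x in Y | cD x == d].

Variables (B : H -> R) (tb : C -> nat).

Definition wage_le (x y : C) : bool :=
  (cW x < cW y) || ((cW x == cW y) && (tb x <= tb y)%N).

Definition Ch_h (h : H) (X' : {set C}) : {set C} :=
  foldl (fun Y x => if wage_h h (x |: Y) <= B h then x |: Y else Y)
        set0 (sort wage_le (enum X')).

Definition Ch_H (Y : {set C}) : {set C} := \bigcup_(h : H) Ch_h h (of_hosp Y h).

Definition Ch_D (P : D -> option C -> nat) (Y : {set C}) : {set C} :=
  [set x in Y | (P (cD x) (Some x) < P (cD x) None)%N &&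
     [forall y in Y, (cD y == cD x) ==> (P (cD x) (Some x) <= P (cD x) (Some y))%N]].

(* with R^(i-1) = Rseq P (i-1):  Y^(i) = Ystep P (Rseq P (i-1)),
   Z^(i) = Zstep P (Rseq P (i-1)). *)
Definition Ystep P (Rj : {set C}) : {set C} := Ch_D P (~: Rj).
Definition Zstep P (Rj : {set C}) : {set C} := Ch_H (Ystep P Rj).

Fixpoint Rseq P (i : nat) : {set C} :=
  match i with
  | 0 => set0
  | i'.+1 => Rseq P i' :|: (Ystep P (Rseq P i') :\: Zstep P (Rseq P i'))
  end.

Definition DA_outputs P (M : {set C}) : Prop :=
  exists i : nat,
    [/\ Ystep P (Rseq P i) = Zstep P (Rseq P i),
        (forall j, (j < i)%N -> Ystep P (Rseq P j) <> Zstep P (Rseq P j)) &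
        M = Ystep P (Rseq P i)].

Definition feasible (Y : {set C}) : Prop :=
  is_matching Y /\ forall h, wage_h h Y <= B h.

Definition blocks (P : D -> option C -> nat) (f : H -> {set C} -> R)
  (Y : {set C}) (h : H) (Z : {set C}) : Prop :=
  [/\ (forall x, x \in Z -> cH x = h), is_matching Z,
      (forall x, x \in Z :\: Y ->
         (P (cD x) (Some x) < P (cD x) (outcome Y (cD x)))%N),
      f h Z > f h (of_hosp Y h) & wage_h h Z <= B h].

Definition stable P f (Y : {set C}) : Prop :=
  feasible Y /\ ~ (exists h Z, blocks P f Y h Z).

End Market.

Definition update (D : eqType) (T : Type) (P : D -> T) (d : D) (p' : T) : D -> T :=
  fun d0 => if d0 == d then p' else P d0.

(* Main.v *)
Require Import Defs.
From HB Require Import structures.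
From mathcomp Require Import all_boot all_order all_algebra.
From mathcomp Require Import lra zify.
Set Implicit Arguments. Unset Strict Implicit. Unset Printing Implicit Defensive.
Import Order.TTheory GRing.Theory Num.Theory.
Local Open Scope ring_scope.

Section Aux.
Variables (R : realFieldType) (D H C : finType).
Variables (cD : C -> D) (cH : C -> H) (cW : C -> R) (B : H -> R) (tb : C -> nat).
Hypothesis Hpos : forall x, 0 < cW x.
Hypothesis HB0 : forall h, 0 <= B h.
Hypothesis Htb : injective tb.

Local Notation le := (wage_le cW tb).

Lemma wle_refl x : le x x.
Proof. by rewrite /wage_le eqxx leqnn orbT. Qed.

Lemma wle_w x y : le x y -> cW x <= cW y.
Proof. by rewrite /wage_le => /orP [/ltW // | /andP [/eqP -> _]]. Qed.

Lemma wle_total x y : le x y || le y x.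
Proof.
rewrite /wage_le; case: (ltrgtP (cW x) (cW y)) => //= _; exact: leq_total.
Qed.

Lemma wle_anti x y : le x y -> le y x -> x = y.
Proof.
rewrite /wage_le; case: (ltrgtP (cW x) (cW y)) => //= _ h1 h2.
apply: Htb; apply/eqP; by rewrite eqn_leq h1 h2.
Qed.

Lemma wle_trans : transitive le.
Proof.
move=> y x z; rewrite /wage_le.
move=> /orP[h1|/andP[/eqP e1 t1]] /orP[h2|/andP[/eqP e2 t2]].
- by rewrite (lt_trans h1 h2).
- by rewrite -e2 h1.
- by rewrite e1 h2.
- by rewrite e1 e2 eqxx (leq_trans t1 t2) orbT.
Qed.

Definition W h (X : {set C}) x := \sum_(y in X | (cH y == h) && le y x) cW y.

Definition step h (Y : {set C}) x :=
  if wage_h cH cW h (x |: Y) <= B h then x |: Y else Y.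

Lemma wage_U1 h (Y : {set C}) x : x \notin Y ->
  wage_h cH cW h (x |: Y) = (if cH x == h then cW x else 0) + wage_h cH cW h Y.
Proof.
move=> xY; rewrite /wage_h !big_mkcondr big_setU1 //.
Qed.

Lemma foldl_char h (s : seq C) (Y0 : {set C}) :
  uniq s -> sorted le s -> (forall x, x \in s -> x \notin Y0) ->
  wage_h cH cW h Y0 <= B h ->
  forall z, (z \in foldl (step h) Y0 s) =
    (z \in Y0) || ((z \in s) && ((cH z != h) ||
       (wage_h cH cW h Y0 + \sum_(y <- s | (cH y == h) && le y z) cW y <= B h))).
Proof.
elim: s Y0 => [|x s IH] Y0 /=.
  by move=> _ _ _ _ z; rewrite orbF.
move=> /andP [xs us] srt dis wB z.
have srt' : sorted le s by apply: (path_sorted srt).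
have allx : all (le x) s by apply: (order_path_min wle_trans srt).
have xY : x \notin Y0 by apply: dis; rewrite inE eqxx.
have dis' : forall y, y \in s -> y \notin Y0 by move=> y ys; apply: dis; rewrite inE ys orbT.
rewrite [step h Y0 x]/step wage_U1 //.
have sum_x : \sum_(y <- s | (cH y == h) && le y x) cW y = 0.
  rewrite big_seq_cond big1 // => y /andP [ys /andP [_ lyx]].
  have := allP allx y ys => lxy.
  by move: xs; rewrite -(wle_anti lyx lxy) ys.
case: ifP => Hc.
-
  have dis2 : forall y, y \in s -> y \notin x |: Y0.
    by move=> y ys; rewrite !inE negb_or dis' // andbT; apply/eqP => E; move: xs; rewrite -E ys.
  have Hc' : wage_h cH cW h (x |: Y0) <= B h by rewrite wage_U1.
  rewrite (IH _ us srt' dis2 Hc') wage_U1 // !inE big_cons.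
  case: (z =P x) => [->|nzx] /=.
    rewrite wle_refl andbT sum_x addr0 /=.
    by move: Hc; case hx: (cH x == h) => /= Hc; rewrite ?orbT // addrC Hc !orbT.
  case: (z \in Y0) => //=; case zs: (z \in s) => //=.
  have lxz : le x z := allP allx z zs.
  rewrite lxz andbT.
  by case: (cH x == h); rewrite ?add0r // addrA [cW x + _]addrC.
-
  rewrite (IH _ us srt' dis' wB) !inE big_cons.
  case: (z =P x) => [->|nzx] /=.
    rewrite (negbTE xY) (negbTE xs) /= wle_refl andbT sum_x addr0.
    move: Hc; case hx: (cH x == h) => /= Hc.
      by rewrite addrC Hc.
    by rewrite add0r wB in Hc.
  case: (z \in Y0) => //=; case zs: (z \in s) => //=.
  have lxz : le x z := allP allx z zs.
  rewrite lxz andbT.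
  move: Hc; case hx: (cH x == h) => /= Hc; last by [].
  case hz: (cH z == h) => //=.
  have Sge : cW z <= \sum_(y <- s | (cH y == h) && le y z) cW y.
    rewrite (big_rem z zs) hz wle_refl /= lerDl sumr_ge0 // => i _.
    exact: ltW.
  have wxz : cW x <= cW z by apply: wle_w.
  have S0 : 0 <= \sum_(y <- s | (cH y == h) && le y z) cW y.
    by rewrite sumr_ge0 // => i _; exact: ltW.
  move/negbT: Hc; rewrite -ltNge => Hc.
  set S := \sum_(j <- s | _) _ in Sge S0 *.
  by rewrite !leNgt; congr negb; apply/idP/idP => _; lra.
Qed.

Lemma wage0 h : wage_h cH cW h set0 = 0.
Proof. by rewrite /wage_h big_pred0 // => x; rewrite inE. Qed.

Lemma Ch_hE h X z : (z \in Ch_h cH cW B tb h X) = (z \in X) && ((cH z != h) || (W h X z <= B h)).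
Proof.
rewrite /Ch_h (@foldl_char h (sort le (enum X)) set0).
- by rewrite inE /= mem_sort mem_enum wage0 add0r (perm_big _ (permEl (perm_sort _ _))) big_enum_cond.
- by rewrite sort_uniq enum_uniq.
- exact: sort_sorted wle_total _.
- by move=> x; rewrite inE.
- by rewrite wage0.
Qed.

Lemma W_hosp h Y z : W h (of_hosp cH Y h) z = W h Y z.
Proof.
rewrite /W; apply: eq_bigl => y; rewrite !inE.
by case: (cH y == h); rewrite ?andbT ?andbF.
Qed.

Lemma Ch_HE Y z : (z \in Ch_H cH cW B tb Y) = (z \in Y) && (W (cH z) Y z <= B (cH z)).
Proof.
rewrite /Ch_H; apply/bigcupP/andP.
- case=> h _; rewrite Ch_hE !inE => /andP[/andP[zY /eqP hz]]; subst h.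
  by rewrite eqxx /= W_hosp.
- case=> zY Wz; exists (cH z) => //; by rewrite Ch_hE !inE zY eqxx /= W_hosp Wz.
Qed.

Lemma foldl_feas h s Y0 : wage_h cH cW h Y0 <= B h ->
  wage_h cH cW h (foldl (step h) Y0 s) <= B h.
Proof.
elim: s Y0 => [|x s IH] Y0 //= wB; apply: IH; rewrite /step; by case: ifP.
Qed.

Lemma wage_Ch_H h Y : wage_h cH cW h (Ch_H cH cW B tb Y) <= B h.
Proof.
have -> : wage_h cH cW h (Ch_H cH cW B tb Y) = wage_h cH cW h (Ch_h cH cW B tb h (of_hosp cH Y h)).
  rewrite /wage_h; apply: eq_bigl => z; rewrite Ch_HE Ch_hE !inE.
  case: (cH z =P h) => [<-|]; rewrite ?andbT ?andbF //.
  by rewrite W_hosp.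
by apply: foldl_feas; rewrite wage0.
Qed.

Lemma sum_sub (P Q : pred C) : (forall v, P v -> Q v) ->
  \sum_(v | P v) cW v <= \sum_(v | Q v) cW v.
Proof.
move=> PQ; rewrite big_mkcond [X in _ <= X]big_mkcond /=; apply: ler_sum => v _.
case Pv: (P v); first by rewrite PQ.
by case: (Q v); rewrite // ltW.
Qed.

Lemma W_mono h (X Y : {set C}) z : X \subset Y -> W h X z <= W h Y z.
Proof.
move=> /subsetP XY; apply: sum_sub => v /andP[vX c]; by rewrite XY.
Qed.

Lemma GL h (T T' : {set C}) u r : u \in T -> cH u = h -> cH r = h -> le u r ->
  (forall v, v \in T -> cH v = h -> le v u -> v != u -> v \in T') ->
  W h T u <= W h (r |: T') r.
Proof.
move=> uT hu hr lur HT; rewrite /W (bigD1 u) /=; last by rewrite uT hu eqxx wle_refl.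
rewrite [X in _ <= X](bigD1 r) /=; last by rewrite setU11 hr eqxx wle_refl.
apply: lerD; first exact: wle_w.
apply: sum_sub => v /andP[/andP[vT /andP[/eqP hv lvu]] nvu].
rewrite !inE hv eqxx /= (wle_trans lvu lur) HT // orbT andbT /=.
apply/eqP => E; subst v; by move: nvu; rewrite (wle_anti lvu lur) eqxx.
Qed.


Lemma setU1_in (x : C) (A : {set C}) : x \in A -> x |: A = A.
Proof. by move=> xA; apply/setUidPr; rewrite sub1set. Qed.

Lemma min_ex (S : {set C}) : S != set0 -> exists2 m, m \in S & forall y, y \in S -> le m y.
Proof.
move=> S0.
suff : forall s : seq C, s != [::] -> exists2 m, m \in s & forall y, y \in s -> le m y.
  move/(_ (enum S)); case.
    by apply: contra S0 => /eqP E; apply/eqP/setP => x; rewrite inE -mem_enum E.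
  by move=> m; rewrite mem_enum => mS Hm; exists m => // y yS; apply: Hm; rewrite mem_enum.
elim=> [//|x s IH] _.
case: s IH => [|x2 s] IH.
  by exists x; rewrite ?inE // => y; rewrite inE => /eqP ->; apply: wle_refl.
case: IH => // m mS Hm.
case lxm: (le x m).
  exists x; first by rewrite inE eqxx.
  move=> y; rewrite inE => /orP[/eqP ->|ys]; first exact: wle_refl.
  by apply: wle_trans lxm (Hm y ys).
exists m; first by rewrite inE mS orbT.
move=> y; rewrite inE => /orP[/eqP ->|ys]; last exact: Hm.
by move: (wle_total x m); rewrite lxm.
Qed.

Definition pref (P : D -> option C -> nat) (mu : {set C}) y :=
  (P (cD y) (Some y) < P (cD y) (outcome cD mu (cD y)))%N.

Definition Sstab (P : D -> option C -> nat) (mu : {set C}) :=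
  [/\ is_matching cD mu,
      (forall x, x \in mu -> P (cD x) (Some x) < P (cD x) None)%N,
      (forall Y : {set C}, (forall y, y \in Y -> y \notin mu -> pref P mu y) ->
         forall x, x \in mu -> W (cH x) (mu :|: Y) x <= B (cH x)) &
      (forall y, y \notin mu -> pref P mu y -> B (cH y) < W (cH y) (y |: mu) y)].

Lemma S_transfer P Q mu : Sstab P mu ->
  (forall x, x \in mu -> Q (cD x) (Some x) < Q (cD x) None)%N ->
  (forall y, y \notin mu -> pref Q mu y -> pref P mu y) -> Sstab Q mu.
Proof.
case=> Hm _ H3 H4 Hacc Hpr; split => //.
- move=> Y HY; apply: H3 => y yY ymu; apply: Hpr => //; exact: HY.
- move=> y ymu py; apply: H4 => //; exact: Hpr.
Qed.

Lemma out_inv M d m : outcome cD M d = Some m -> m \in M /\ cD m = d.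
Proof.
rewrite /outcome; case: pickP => [y /andP[yM /eqP yd] [<-] | _] //.
Qed.

Lemma out_none M d : outcome cD M d = None -> forall m, m \in M -> cD m <> d.
Proof.
rewrite /outcome; case: pickP => [//| H0] _ m mM md.
by move: (H0 m); rewrite mM md eqxx.
Qed.

Lemma out_some M m : is_matching cD M -> m \in M -> outcome cD M (cD m) = Some m.
Proof.
move=> HM mM; rewrite /outcome; case: pickP => [y /andP[yM /eqP yd]|H0]; last first.
  by move: (H0 m); rewrite mM eqxx.
congr Some; move: (HM (cD m)) => /card_le1_eqP H1.
by apply: H1; rewrite !inE ?yM ?mM ?yd eqxx.
Qed.

Section DA.
Variable P : D -> option C -> nat.
Local Notation Rs := (Rseq cD cH cW B tb P).
Local Notation Ys k := (Ystep cD P (Rs k)).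
Local Notation Zs k := (Zstep cD cH cW B tb P (Rs k)).

Lemma ChD_P (S : {set C}) x : x \in Ch_D cD P S ->
  [/\ x \in S, (P (cD x) (Some x) < P (cD x) None)%N &
      forall y, y \in S -> cD y = cD x -> (P (cD x) (Some x) <= P (cD x) (Some y))%N].
Proof.
rewrite /Ch_D inE => /andP[xS /andP[acc /forallP Hf]]; split => // y yS Hy.
by move: (Hf y); rewrite yS Hy eqxx.
Qed.

Lemma ChD_I (S : {set C}) x : x \in S -> (P (cD x) (Some x) < P (cD x) None)%N ->
  (forall y, y \in S -> cD y = cD x -> (P (cD x) (Some x) <= P (cD x) (Some y))%N) ->
  x \in Ch_D cD P S.
Proof.
move=> xS acc H0; rewrite /Ch_D inE xS acc /=; apply/forallP => y.
apply/implyP => yS; apply/implyP => /eqP Hy; exact: H0.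
Qed.

Lemma ChD_ex (S : {set C}) x : x \in S -> (P (cD x) (Some x) < P (cD x) None)%N ->
  exists2 m, m \in Ch_D cD P S & cD m = cD x /\ (P (cD x) (Some m) <= P (cD x) (Some x))%N.
Proof.
move=> xS acc.
have Px : (fun m => (m \in S) && (cD m == cD x)) x by rewrite /= xS eqxx.
case: (@arg_minnP _ x (fun m => (m \in S) && (cD m == cD x)) (fun m => P (cD x) (Some m)) Px) => m /andP[mS /eqP md] Hmin.
exists m; last by split => //; apply: Hmin; rewrite xS eqxx.
apply: ChD_I => //.
  by rewrite md; apply: leq_ltn_trans acc; apply: Hmin; rewrite xS eqxx.
by move=> y yS yd; rewrite md; apply: Hmin; rewrite yS yd md eqxx.
Qed.

Hypothesis HP : forall d, strict_pref cD d (P d).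

Lemma P_inj d y z : cD y = d -> cD z = d -> P d (Some y) = P d (Some z) -> y = z.
Proof.
move=> yd zd E; have := @HP d (Some y) (Some z); rewrite !inE /= yd zd eqxx => /(_ isT isT E); by case.
Qed.

Lemma P_injN d y : cD y = d -> P d (Some y) <> P d None.
Proof.
move=> yd E; have := @HP d (Some y) None; rewrite !inE /= yd eqxx => /(_ isT isT E); by [].
Qed.

Lemma ChD_uniq (S : {set C}) x y : x \in Ch_D cD P S -> y \in Ch_D cD P S -> cD x = cD y -> x = y.
Proof.
case/ChD_P => xS _ bx; case/ChD_P => yS _ by_ Exy.
apply: (P_inj (d := cD x) (erefl _) (esym Exy)).
have h1 := bx y yS (esym Exy).
have h2 := by_ x xS Exy.
by apply/eqP; rewrite eqn_leq h1 /= Exy.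
Qed.

Lemma ChD_match (S : {set C}) : is_matching cD (Ch_D cD P S).
Proof.
move=> d; apply/card_le1_eqP => x y /setIdP[xin /eqP xd] /setIdP[yin /eqP yd].
by apply: ChD_uniq yin xin _; rewrite xd yd.
Qed.


Lemma Rs_S k : Rs k.+1 = Rs k :|: (Ys k :\: Zs k).
Proof. by []. Qed.

Lemma Ys_notR k x : x \in Ys k -> x \notin Rs k.
Proof. by case/ChD_P; rewrite inE. Qed.

Lemma Zs_sub k x : x \in Zs k -> x \in Ys k.
Proof. by rewrite /Zstep Ch_HE => /andP[]. Qed.

Lemma persist k x : x \in Ys k -> x \in Zs k -> x \in Ys k.+1.
Proof.
move=> xY xZ; case/ChD_P: (xY) => xnR acc best.
apply: ChD_I => //.
  by move: xnR; rewrite Rs_S !in_setC in_setU in_setD negb_or => ->; rewrite xZ.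
move=> y; rewrite Rs_S !in_setC in_setU negb_or => /andP[ynR _] yd; apply: best => //.
by rewrite in_setC.
Qed.

Lemma Inv k r : r \in Rs k -> B (cH r) < W (cH r) (r |: Ys k) r.
Proof.
elim: k r => [|k IH] r; first by rewrite inE.
set h := cH r.
move=> rR.
have base : B h < W h (r |: Ys k) r.
  move: rR; rewrite Rs_S inE => /orP[rR|]; first exact: IH.
  move=> /setDP[rY rZ]; rewrite setU1_in //.
  by move: rZ; rewrite /Zstep Ch_HE rY /= -ltNge.
set U := [set u in Ys k | [&& cH u == h, le u r & u \notin Zs k]].
case: (set_0Vmem U) => [U0 | [u0 u0U]].
- apply: (lt_le_trans base); apply: sum_sub => v /andP[vin /andP[hv lvr]].
  rewrite hv lvr andbT; move: vin; rewrite !in_setU1 => /orP[->//|vY].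
  case vZ: (v \in Zs k); first by rewrite (persist vY vZ) orbT.
  have : v \in U by rewrite inE vY hv lvr vZ.
  by rewrite U0 inE.
- have [m0 m0U Hmin] : exists2 m, m \in U & forall y, y \in U -> le m y.
    by apply: min_ex; apply/set0Pn; exists u0.
  move: (m0U); rewrite inE => /andP[m0Y /and3P[/eqP hm0 lm0r m0Z]].
  have Bm : B h < W h (Ys k) m0.
    by move: m0Z; rewrite /Zstep Ch_HE m0Y /= -ltNge hm0.
  apply: (lt_le_trans Bm); apply: GL => //.
  move=> v vY hv lvm nvm.
  case vZ: (v \in Zs k); first by apply: persist.
  have vU : v \in U by rewrite inE vY hv (wle_trans lvm lm0r) vZ eqxx.
  by move: nvm; rewrite (wle_anti lvm (Hmin v vU)) eqxx.
Qed.

Lemma notR_pref n y : y \notin Ys n -> pref P (Ys n) y -> y \in Rs n.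
Proof.
move=> yM py; apply/negPn/negP => ynR.
have ynR' : y \in ~: Rs n by rewrite inE.
move: py; rewrite /pref; case E: (outcome cD (Ys n) (cD y)) => [m|].
- case: (out_inv E) => mM md.
  case/ChD_P: mM => _ _ best; have := best y ynR' (esym md).
  by rewrite md leqNgt => /negbTE ->.
- move=> acc; case: (ChD_ex ynR' acc) => m mM [md _].
  by apply: (out_none E mM).
Qed.

Lemma DA_S n : Ys n = Zs n -> Sstab P (Ys n).
Proof.
move=> Efix; split.
- exact: ChD_match.
- by move=> x /ChD_P[].
- move=> Y HY x xM; set h := cH x.
  have WM : W h (Ys n) x <= B h.
    have xZ : x \in Zs n by rewrite -Efix.
    by move: xZ; rewrite /Zstep Ch_HE => /andP[].
  apply: le_trans (WM); apply: sum_sub => v /andP[vin /andP[/eqP hv lvx]].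
  rewrite hv eqxx lvx /= andbT; move: vin; rewrite in_setU => /orP[//|vY].
  apply/negPn/negP => vM.
  have vR := notR_pref vM (HY v vY vM).
  have := Inv vR; rewrite hv => Bv.
  have : W h (v |: Ys n) v <= W h (x |: Ys n) x.
    apply: GL => //; first by rewrite setU11.
    move=> w; rewrite in_setU1 => /orP[/eqP->|//] _ _; by rewrite eqxx.
  rewrite (setU1_in xM) => H1.
  by move: (lt_le_trans Bv (le_trans H1 WM)); rewrite ltxx.
- move=> y yM py; exact: Inv (notR_pref yM py).
Qed.

Lemma LemA mu : Sstab P mu -> forall k x, x \in mu -> x \notin Rs k.
Proof.
case=> _ _ H3 _; elim=> [|k IH] x xmu; first by rewrite inE.
rewrite Rs_S inE negb_or IH //=; apply/negP => /setDP[xY xZ].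
have Bx : B (cH x) < W (cH x) (Ys k) x.
  by move: xZ; rewrite /Zstep Ch_HE xY /= -ltNge.
have : W (cH x) (mu :|: Ys k) x <= B (cH x).
  apply: H3 => // y yY ymu; rewrite /pref.
  case/ChD_P: (yY) => ynR acc best.
  case E: (outcome cD mu (cD y)) => [z|//].
  case: (out_inv E) => zmu zd.
  have zR : z \in ~: Rs k by rewrite inE IH.
  have := best z zR zd; rewrite leq_eqVlt => /orP[/eqP Eq|//].
  have := P_inj (erefl _) zd Eq => yz; by move: ymu; rewrite yz zmu.
move=> H1; have := lt_le_trans Bx (le_trans (W_mono _ _ (subsetUr mu (Ys k))) H1).
by rewrite ltxx.
Qed.

Lemma LemA' mu n x : Sstab P mu -> x \in mu ->
  (P (cD x) (outcome cD (Ys n) (cD x)) <= P (cD x) (Some x))%N.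
Proof.
move=> Hs xmu; have xnR := LemA Hs n xmu.
case: Hs => _ acc _ _.
have xR : x \in ~: Rs n by rewrite inE.
case: (ChD_ex xR (acc x xmu)) => m mM [md le_m].
by rewrite -md out_some // ?md //; apply: ChD_match.
Qed.

Lemma term : exists n, Ys n = Zs n.
Proof.
have step : forall k, Ys k != Zs k -> (#|Rs k| < #|Rs k.+1|)%N.
  move=> k neq; apply: proper_card; apply/properP; split; first by rewrite Rs_S subsetUl.
  have [x xY xZ] : exists2 x, x \in Ys k & x \notin Zs k.
    case: (boolP [exists x, (x \in Ys k) && (x \notin Zs k)]) => [/existsP[x /andP[? ?]] | /existsPn H0].
      by exists x.
    exfalso; move/negP: neq; apply; rewrite eqEsubset; apply/andP; split; apply/subsetP => x.
      by move=> xY; have := H0 x; rewrite xY /= negbK.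
    exact: Zs_sub.
  exists x; first by rewrite Rs_S in_setU in_setD xY xZ orbT.
  exact: Ys_notR xY.
case: (boolP [exists n : 'I_#|C|.+2, Ys n == Zs n]) => [/existsP[n /eqP E] | /existsPn H0].
  by exists n.
exfalso.
have grow : forall k, (k < #|C|.+2)%N -> (k <= #|Rs k|)%N.
  elim=> // k IH lt.
  have neq : Ys k != Zs k := H0 (Ordinal (ltnW lt)).
  have h2 := step k neq; have h1 := IH (ltnW lt).
  exact: leq_ltn_trans h1 h2.
have h2 := grow #|C|.+1 (ltnSn _); have h1 := max_card (Rs #|C|.+1).
by have := leq_trans h2 h1; rewrite ltnn.
Qed.

Lemma DA_exists : exists M, DA_outputs cD cH cW B tb P M.
Proof.
have ex : exists n, Ys n == Zs n by case: term => n E; exists n; apply/eqP.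
pose n := ex_minn ex; exists (Ys n), n; rewrite /n.
case: ex_minnP => m /eqP Em Hmin; split => // j jm Ej.
by move: (Hmin j (introT eqP Ej)); rewrite leqNgt jm.
Qed.
End DA.

Lemma wage_set h X : wage_h cH cW h X = \sum_(x in [set x in X | cH x == h]) cW x.
Proof. by apply: eq_bigl => x; rewrite inE. Qed.

Lemma card_hosp (A : {set C}) : #|A| = (\sum_h #|[set x in A | cH x == h]|)%N.
Proof.
rewrite -sum1_card (partition_big cH predT) //; apply: eq_bigr => h _.
by rewrite -sum1_card; apply: eq_bigl => x; rewrite inE.
Qed.

Lemma card_h P mu (Z : {set C}) h : Sstab P mu ->
  (forall y, y \in Z -> y \notin mu -> pref P mu y) -> wage_h cH cW h Z <= B h ->
  (#|[set x in Z | cH x == h]| <= #|[set x in mu | cH x == h]|)%N.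
Proof.
case=> _ _ H3 H4 HZ wZ.
set Zh := [set x in Z | cH x == h]; set Mh := [set x in mu | cH x == h].
set U := Zh :\: Mh.
case: (set_0Vmem U) => [U0 | [u0 u0U]].
  apply: subset_leq_card; apply/subsetP => x xZ; apply/negPn/negP => xM.
  have : x \in U by rewrite in_setD xM xZ.
  by rewrite U0 inE.
have [m0 m0U Hmin] : exists2 m, m \in U & forall y, y \in U -> le m y.
  by apply: min_ex; apply/set0Pn; exists u0.
move: (m0U); rewrite in_setD => /andP[m0M /setIdP[m0Z /eqP hm0]].
have m0mu : m0 \notin mu by move: m0M; rewrite inE hm0 eqxx andbT.
have Bm := H4 m0 m0mu (HZ m0 m0Z m0mu); rewrite hm0 in Bm.
have lxm : forall x, x \in Mh -> cW x <= cW m0.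
  move=> x /setIdP[xmu /eqP hx].
  have nl : ~~ le m0 x.
    apply/negP => lmx.
    have H1 : W h (m0 |: mu) m0 <= W h (x |: (mu :|: Z)) x.
      apply: GL => //; first by rewrite setU11.
      move=> w; rewrite in_setU1 => /orP[/eqP->|wmu] _ _; first by rewrite eqxx.
      by rewrite in_setU wmu.
    rewrite (@setU1_in x (mu :|: Z)) ?in_setU ?xmu // in H1.
    have H2 := H3 Z HZ x xmu; rewrite hx in H2.
    by have := lt_le_trans Bm (le_trans H1 H2); rewrite ltxx.
  by have := wle_total x m0; rewrite (negbTE nl) orbF; apply: wle_w.
have lmy : forall y, y \in U -> cW m0 <= cW y by move=> y yU; apply: wle_w; apply: Hmin.
have Wb : W h (m0 |: mu) m0 <= cW m0 + wage_h cH cW h mu.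
  have E := wage_U1 h m0mu; rewrite hm0 eqxx in E; rewrite -E.
  by apply: sum_sub => v /andP[vin /andP[hv _]]; rewrite vin hv.
rewrite wage_set (big_setID Mh) /= -/Zh in wZ.
rewrite wage_set (big_setID Zh) /= -/Mh setIC in Wb.
have b1 : cW m0 *+ #|U| <= \sum_(x in U) cW x.
  by rewrite -sumr_const; apply: ler_sum => y yU; apply: lmy.
have b2 : \sum_(x in Mh :\: Zh) cW x <= cW m0 *+ #|Mh :\: Zh|.
  rewrite -sumr_const; apply: ler_sum => y; rewrite in_setD => /andP[_ yM]; exact: lxm.
have w0 := Hpos m0.
have key : cW m0 * #|U|%:R < cW m0 * (#|Mh :\: Zh|.+1)%:R.
  rewrite -natr1 mulrDr mulr1 !mulr_natr.
  move: b1 b2 wZ Wb Bm; rewrite -/U.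
  set a := \sum_(i in Zh :&: Mh) cW i; set sU := \sum_(i in U) cW i.
  set sV := \sum_(i in Mh :\: Zh) cW i; set X := cW m0 *+ #|U|.
  set Y := cW m0 *+ #|Mh :\: Zh|; set w := W h (m0 |: mu) m0.
  move=> *; lra.
rewrite ltr_pM2l // ltr_nat ltnS in key.
rewrite -(cardsID Mh Zh) -(cardsID Zh Mh) setIC leq_add2l.
exact: key.
Qed.


Lemma LemB P (HP : forall d, strict_pref cD d (P d)) mu n d :
  Sstab P mu ->
  Ystep cD P (Rseq cD cH cW B tb P n) = Zstep cD cH cW B tb P (Rseq cD cH cW B tb P n) ->
  outcome cD mu d = None -> outcome cD (Ystep cD P (Rseq cD cH cW B tb P n)) d = None.
Proof.
move=> Hs Efix On.
set M := Ystep cD P (Rseq cD cH cW B tb P n).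
have HM : is_matching cD M by apply: ChD_match.
have Hpr : forall y, y \in M -> y \notin mu -> pref P mu y.
  move=> y yM ymu; rewrite /pref; have Ey := out_some HM yM.
  case E: (outcome cD mu (cD y)) => [z|].
    case: (out_inv E) => zmu zd.
    have := LemA' HP n Hs zmu; rewrite zd -/M Ey leq_eqVlt => /orP[/eqP Eq|//].
    have yz := P_inj HP (erefl _) zd Eq; by move: ymu; rewrite yz zmu.
  by case/ChD_P: yM.
have Hcard : forall h, (#|[set x in M | cH x == h]| <= #|[set x in mu | cH x == h]|)%N.
  move=> h; apply: (card_h Hs Hpr); rewrite /M Efix /Zstep; exact: wage_Ch_H.
have cM : (#|M| <= #|mu|)%N by rewrite !card_hosp; apply: leq_sum => h _; exact: Hcard.
case E: (outcome cD M d) => [m|//]; exfalso.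
case: (out_inv E) => mM md.
have sub : cD @: mu \subset cD @: M.
  apply/subsetP => _ /imsetP[x xmu ->].
  have := LemA' HP n Hs xmu; rewrite -/M.
  case E2: (outcome cD M (cD x)) => [m'|].
    case: (out_inv E2) => m'M m'd _; apply/imsetP; exists m' => //; by rewrite m'd.
  by case: Hs => _ acc _ _; rewrite leqNgt (acc x xmu).
have prop : cD @: mu \proper cD @: M.
  apply/properP; split => //; exists d.
    by apply/imsetP; exists m => //; rewrite md.
  apply/imsetP => [[x xmu xd]]; exact: (out_none On xmu (esym xd)).
have h1 := proper_card prop; have h2 := leq_imset_card cD M.
rewrite card_in_imset in h1; last first.
  move=> x y xmu ymu Exy; case: Hs => Hm _ _ _.
  move: (Hm (cD x)) => /card_le1_eqP H1; apply/esym; apply: H1; rewrite !inE ?xmu ?ymu ?Exy eqxx //.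
by have := leq_trans h1 (leq_trans h2 cM); rewrite ltnn.
Qed.

Definition p2 (x' : C) (o : option C) : nat :=
  if o is Some y then (if y == x' then 0 else (pickle y).+2)%N else 1%N.

Lemma p2_inj x' : injective (p2 x').
Proof.
case=> [y1|] [y2|] //=; do ?case: eqP => //.
- by move=> -> ->.
- by move=> _ _ [] /(pcan_inj pickleK) ->.
Qed.

Lemma p2_0 x' o : p2 x' o = 0%N -> o = Some x'.
Proof. by case: o => [y|] //=; case: eqP => [->|]. Qed.

Definition pt (p : option C -> nat) (x' : C) (o : option C) : nat :=
  if o is Some _ then (if (p o <= p (Some x'))%N then p o else (p o).+1) else (p (Some x')).+1.

Lemma pt_strict d p x' : strict_pref cD d p -> strict_pref cD d (pt p x').
Proof.
move=> Hp o1 o2 i1 i2; rewrite /pt.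
have := Hp o1 o2 i1 i2.
case: o1 i1 => [y1|] i1; case: o2 i2 => [y2|] i2 //=.
- case: ifP => h1; case: ifP => h2 HH E; apply: HH; lia.
- case: ifP => h1 HH E; lia.
- case: ifP => h1 HH E; lia.
Qed.

Lemma strict_update P d q : (forall d0, strict_pref cD d0 (P d0)) -> strict_pref cD d q ->
  forall d0, strict_pref cD d0 (update P d q d0).
Proof. by move=> HP Hq d0; rewrite /update; case: eqP => [->|]. Qed.


Lemma part1 P (f : H -> {set C} -> R) (gamma : H -> R) :
  (forall d, strict_pref cD d (P d)) -> (forall h, 0 < gamma h) ->
  (forall h (Y : {set C}), (forall x, x \in Y -> cH x = h) -> f h Y = gamma h * (#|Y|%:R)) ->
  exists M, DA_outputs cD cH cW B tb P M /\ stable cD cH cW B P f M.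
Proof.
move=> HP Hg Hf; case: (DA_exists P) => M HDA; exists M; split => //.
case: (HDA) => n [En _ EM].
have SM : Sstab P M by rewrite EM; exact: DA_S.
split.
  split; first by rewrite EM; exact: ChD_match.
  by move=> h; rewrite EM En; exact: wage_Ch_H.
case=> h [Z [HZh _ Hpr Hfgt wZ]].
have Hpr' : forall y, y \in Z -> y \notin M -> pref P M y.
  by move=> y yZ yM; apply: Hpr; rewrite in_setD yZ yM.
have Hc := card_h SM Hpr' wZ.
have EZ : [set x in Z | cH x == h] = Z.
  apply/setP => x; rewrite inE; case xZ: (x \in Z) => //=; by rewrite HZh ?eqxx.
rewrite EZ in Hc.
rewrite (Hf h Z HZh) (Hf h (of_hosp cH M h)) in Hfgt; last by move=> x; rewrite inE => /andP[_ /eqP].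
rewrite ltr_pM2l // ltr_nat in Hfgt.
by rewrite /of_hosp ltnNge Hc in Hfgt.
Qed.

Lemma part2 P d p' : (forall d0, strict_pref cD d0 (P d0)) -> strict_pref cD d p' ->
  forall M M', DA_outputs cD cH cW B tb P M ->
  DA_outputs cD cH cW B tb (update P d p') M' ->
  (P d (outcome cD M d) <= P d (outcome cD M' d))%N.
Proof.
move=> HP Hp' M M' [n [En _ EM]] [n' [En' _ EM']].
set P' := update P d p'.
have HP' := strict_update HP Hp'.
have SM' : Sstab P' M' by rewrite EM'; apply: DA_S.
have accM : (P d (outcome cD M d) <= P d None)%N.
  case E: (outcome cD M d) => [m|//].
  case: (out_inv E) => mM md; rewrite EM in mM; case/ChD_P: mM => _ acc _.
  by rewrite md in acc; exact: ltnW.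
rewrite leqNgt; apply/negP => Hlt.
case E': (outcome cD M' d) => [x'|]; rewrite E' in Hlt; last by rewrite ltnNge accM in Hlt.
case: (out_inv E') => x'M' x'd.
have accx : (P d (Some x') < P d None)%N := leq_trans Hlt accM.
set P'' := update P d (p2 x').
have HP'' := strict_update HP (fun o1 o2 _ _ E => @p2_inj x' o1 o2 E) : forall d0, strict_pref cD d0 (P'' d0).
have S'' : Sstab P'' M'.
  apply: (S_transfer SM').
  - move=> x xM'; rewrite /P'' /update; case: eqP => [xd|nxd].
      have : Some x = Some x' by rewrite -E' -xd out_some //; case: SM'.
      by case=> ->; rewrite /p2 eqxx.
    case: SM' => _ acc _ _; have := acc x xM'; rewrite /P' /update; by case: eqP nxd.
  - move=> y ymu; rewrite /pref /P'' /P' /update; case: eqP => [yd|//].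
    by rewrite yd E' /p2 eqxx.
case: (DA_exists P'') => M'' [n'' [En'' _ EM'']].
have Hd'' : outcome cD M'' d = Some x'.
  have := LemA' HP'' n'' S'' x'M'; rewrite x'd -EM'' /P'' /update eqxx /p2 eqxx leqn0.
  by move/eqP/p2_0.
set Pt := update P d (pt (P d) x').
have HPt := strict_update HP (@pt_strict d (P d) x' (HP d)) : forall d0, strict_pref cD d0 (Pt d0).
case: (DA_exists Pt) => Mt [nt [Ent _ EMt]].
have St : Sstab Pt Mt by rewrite EMt; apply: DA_S.
case Et: (outcome cD Mt d) => [w|].
- case: (out_inv Et) => wMt wd.
  have Pw : (P d (Some w) <= P d (Some x'))%N.
    case: St => _ acc _ _; have := acc w wMt; rewrite wd /Pt /update eqxx /pt.
    case: ifP => // /negbT; rewrite -ltnNge => lt; rewrite ltnS => le'; lia.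
  have SP : Sstab P Mt.
    apply: (S_transfer St).
    - move=> x xMt; case: (cD x =P d) => [xd|nxd].
        have : Some x = Some w by rewrite -Et -xd out_some //; case: St.
        case=> ->; rewrite wd; exact: leq_ltn_trans Pw accx.
      case: St => _ acc _ _; have := acc x xMt; rewrite /Pt /update; by case: eqP nxd.
    - move=> y ymu; rewrite /pref /Pt /update; case: eqP => [yd|//]; rewrite yd Et /pt /= => Hy.
      by rewrite Pw (leq_trans (ltnW Hy) Pw).
  have := LemA' HP n SP wMt; rewrite wd -EM => H1.
  lia.
- have SP'' : Sstab P'' Mt.
    apply: (S_transfer St).
    - move=> x xMt; case: (cD x =P d) => [xd|nxd].
        by have := out_none Et xMt.
      case: St => _ acc _ _; have := acc x xMt; rewrite /P'' /Pt /update; by case: eqP nxd.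
    - move=> y ymu; rewrite /pref /P'' /Pt /update; case: eqP => [yd|//]; rewrite yd Et /= => Hy.
      have : p2 x' (Some y) = 0%N by move: Hy; rewrite ltnS leqn0 => /eqP.
      by move/p2_0 => [->]; rewrite /pt leqnn.
  have := LemB HP'' SP'' En'' Et; rewrite -EM'' Hd''; discriminate.
Qed.
End Aux.

Unset Implicit Arguments.
Set Strict Implicit.

Theorem theorem8
  (R : realFieldType) (D H C : finType)
  (cD : C -> D) (cH : C -> H) (cW : C -> R)
  (B : H -> R) (f : H -> {set C} -> R) (gamma : H -> R) (tb : C -> nat)
  (* contracts are distinct triples (doctor, hospital, wage) *)
  (Hinj : forall x y, cD x = cD y -> cH x = cH y -> cW x = cW y -> x = y)
  (HB : forall h, 0 < B h)
  (Hwage : forall x, 0 < cW x /\ cW x <= B (cH x))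
  (Hgamma : forall h, 0 < gamma h)
  (Hf : forall h (Y : {set C}), (forall x, x \in Y -> cH x = h) ->
          f h Y = gamma h * (#|Y|%:R))
  (Htb : injective tb) :
  (* DA terminates with a B_H-stable matching *)
  (forall P : D -> option C -> nat, (forall d, strict_pref cD d (P d)) ->
     exists M, DA_outputs cD cH cW B tb P M /\ stable cD cH cW B P f M)
  /\
  (* strategy-proofness for doctors *)
  (forall (P : D -> option C -> nat) (d : D) (p' : option C -> nat),
     (forall d0, strict_pref cD d0 (P d0)) -> strict_pref cD d p' ->
     forall M M', DA_outputs cD cH cW B tb P M ->
       DA_outputs cD cH cW B tb (update P d p') M' ->
       (P d (outcome cD M d) <= P d (outcome cD M' d))%N).
Proof.
have Hpos : forall x, 0 < cW x by move=> x; case: (Hwage x).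
have HB0 : forall h, 0 <= B h by move=> h; apply: ltW.
split.
- move=> P HP; exact: (part1 Hpos HB0 Htb HP Hgamma Hf).
- move=> P d p' HP Hp' M M' HM HM'; exact: (part2 Hpos HB0 Htb HP Hp' HM HM').
Qed.
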